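(* The rule specifying (a) an object $E[l]=\mathsf{R}^l$ of $\Sigma$ for every $l\in\mathbb{N}$ and (b) a morphism $Ef:E[l]\to E[m]$ given by $Ef(x)_s=\sum_{r\in[l],f(r)=s}x_r$ with $s\in[m]$ and $x\in E[l]$, for every $l,m\in\mathbb{N}$ and $f\in\mathrm{Hom}_\Omega([l],[m])$, defines a functor $E:\Omega\rightarrow\Sigma$ injective on objects and morphisms. Hence, there exists an $\Omega$ category $E\Omega$ having the functor $E$ with the target category restricted from $\Sigma$ to $E\Omega$ as its stalk isofunctor. Furthermore, $E\Omega$ is a non monoidal subcategory of $\Sigma$.
   Context: $\mathsf{R}$ is an additive finite commutative monoid with $\mathsf{R}\neq0$; $\mathsf{R}^l$ is regarded as a set, with $E[0]=0$. $\Sigma$ is the category of finite sets and functions; $\Omega$ the category of finite ordinals $[l]=\{0,\dots,l-1\}$ and all functions, strict monoidal with $[l]\smile[m]=[l+m]$, $f\smile g(i)=f(i)$ for $i\in[l]$ and $g(i-l)+p$ for $i\in[m]+l$ (for $f:[l]\to[p]$, $g:[m]\to[q]$), unit $[0]$. An $\Omega$ category is a Pro category $D\Omega$ with a strict monoidal isofunctor (stalk isofunctor) $D:\Omega\to D\Omega$; for $D$ injective on objects and morphisms, $D\Omega$ has objects $D[l]$, morphisms $Df$, composition $D(g\circ f)$, identities $D\,\mathrm{id}_{[l]}$, monoidal products $D[l]\smile D[m]=D([l]\smile[m])$, $Df\smile Dg=D(f\smile g)$, unit $D[0]$. *)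

(* Defs.v *)
From HB Require Import structures.
From mathcomp Require Import all_boot all_order all_algebra.
Set Implicit Arguments. Unset Strict Implicit. Unset Printing Implicit Defensive.
Import GRing.Theory.
Local Open Scope ring_scope.

(* R : a finite additive commutative monoid (finNmodType).
   Objects of Sigma: finite sets; E[l] = R^l is the finite set l.-tuple R,
   which is literally the subset of seq R of sequences of size l. *)

(* E[l] as a subset of the common ambient type seq R (used to compare objects). *)
Definition Eob (R : finNmodType) (l : nat) : pred (seq R) :=
  [pred s : seq R | size s == l].

Definition Emor (R : finNmodType) (l m : nat) (f : 'I_l -> 'I_m)
  (x : l.-tuple R) : m.-tuple R :=
  [tuple \sum_(r < l | f r == s) tnth x r | s < m].

(* Main.v *)
Require Import Defs.
From HB Require Import structures.
From mathcomp Require Import all_boot all_order all_algebra.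
From mathcomp Require Import zify.
Local Open Scope ring_scope.
Import GRing.Theory.

Lemma sum_ind (R : finNmodType) (l : nat) (P : pred 'I_l) (r : 'I_l) (a : R) :
  \sum_(i | P i) (if i == r then a else 0) = if P r then a else 0.
Proof.
rewrite big_mkcond /= (bigD1 r) //= eqxx big1 ?addr0 //.
by move=> i /negbTE ->; case: (P i).
Qed.

Theorem proposition4p1 (R : finNmodType) (hR : exists x : R, x != 0) :
  (* functoriality: identities *)
  (forall (l : nat) (x : l.-tuple R), Emor (@id 'I_l) x = x) /\
  (* functoriality: composition *)
  (forall (l m n : nat) (f : 'I_l -> 'I_m) (g : 'I_m -> 'I_n) (x : l.-tuple R),
      Emor (g \o f) x = Emor g (Emor f x)) /\
  (* injective on objects *)
  (forall l l' : nat, @Eob R l =i @Eob R l' -> l = l') /\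
  (* injective on morphisms *)
  (forall (l m : nat) (f g : 'I_l -> 'I_m),
      (forall x : l.-tuple R, Emor f x = Emor g x) -> f =1 g) /\
  (* E Omega is not a monoidal subcategory of (Sigma, disjoint union):
     E[l] ⌣ E[m] = E[l+m] is not the coproduct E[l] ⊔ E[m] *)
  (exists l m : nat,
      #|{: l.-tuple R + m.-tuple R}| != #|{: (l + m).-tuple R}|)%N.
Proof.
have [a a0] := hR.
split.
  move=> l x; apply: eq_from_tnth => s; rewrite /Emor tnth_mktuple.
  by rewrite (big_pred1_eq _ s).
split.
  move=> l m n f g x; apply: eq_from_tnth => s; rewrite /Emor !tnth_mktuple.
  rewrite (partition_big f (fun t => g t == s)) //=.
  apply: eq_bigr => t gt; rewrite tnth_mktuple.
  by apply: eq_bigl => r /=; case: (f r =P t) => [->|]; rewrite ?gt ?andbF.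
split.
  move=> l l' H; have := H (nseq l (0 : R)).
  by rewrite !inE size_nseq eqxx => /esym/eqP.
split.
  move=> l m f g H r; apply/eqP/negPn/negP => ne.
  have := congr1 (fun t => tnth t (f r)) (H [tuple if i == r then a else 0 | i < l]).
  rewrite /Emor /= !tnth_mktuple.
  under eq_bigr do rewrite tnth_mktuple.
  under [in RHS]eq_bigr do rewrite tnth_mktuple.
  rewrite !sum_ind eqxx eq_sym (negbTE ne) => /eqP; by rewrite (negbTE a0).
exists 2%N, 2%N; rewrite card_sum !card_tuple.
have : (1 < #|R|)%N.
  by apply/card_gt1P; exists a, 0; rewrite !inE.
move: #|R| => k hk; apply/eqP => E.
have h4 : (4 <= k ^ 2)%N by nia.
rewrite addnn expnD -mul2n in E; nia.
Qed.
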